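(* Let $k$ be a positive integer. A graph $G$ belongs to $\mathcal{F}_k$ if and only if $G=G_1*_k G_2$ where, for each $i=1,2$, either $G_i=K_1$ or $G_i$ is uniformly dense with density $k$.
   Context: Graphs are finite, loopless, possibly with multiple edges. $\kappa'(G)$ is the edge connectivity; $\tau(G)$ is the maximum number of edge-disjoint spanning trees of a connected graph $G$. $\omega(G)$ is the number of components. For a nontrivial graph $G$, $d(G)=\frac{|E(G)|}{|V(G)|-\omega(G)}$ and $\gamma(G)=\max d(H)$ over subgraphs $H$ with nonzero denominator; $G$ is uniformly dense with density $k$ if $d(G)=\gamma(G)=k$. For vertex-disjoint connected graphs $G_1,G_2$ and a set $K$ of $k$ edges each having one end in $V(G_1)$ and the other in $V(G_2)$, the $k$-edge-join $G_1*_k G_2$ is the graph with vertex set $V(G_1)\cup V(G_2)$ and edge set $E(G_1)\cup E(G_2)\cup K$. For $n>1$, $\mathcal{F}_{k,n}$ is the set of graphs $G$ on $n$ vertices with $\kappa'(G)=\tau(G)=k$ whose number of edges is minimum among all graphs on $n$ vertices with $\kappa'=\tau=k$; $\mathcal{F}_k=\bigcup_{n>1}\mathcal{F}_{k,n}$. *)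

(* Defs.v *)
From HB Require Import structures.
From mathcomp Require Import all_boot all_order all_algebra.
Set Implicit Arguments. Unset Strict Implicit. Unset Printing Implicit Defensive.
Import Order.TTheory GRing.Theory Num.Theory.

Record mgraph := MGraph {
  vert : finType;
  edge : finType;
  esrc : edge -> vert;
  edst : edge -> vert;
  loopless : forall e, esrc e != edst e }.

Section Defs.
Variable G : mgraph.

Definition is_subgraph (S : {set vert G}) (F : {set edge G}) : bool :=
  [forall e in F, (esrc e \in S) && (edst e \in S)].

Definition adj (F : {set edge G}) : rel (vert G) := fun x y =>
  [exists e in F, ((esrc e == x) && (edst e == y)) || ((esrc e == y) && (edst e == x))].

Definition ncomp (S : {set vert G}) (F : {set edge G}) : nat :=
  #|[set [set y in S | connect (adj F) x y] | x in S]|.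

Definition connectedb (S : {set vert G}) (F : {set edge G}) : bool :=
  (S != set0) && [forall x in S, [forall y in S, connect (adj F) x y]].

Definition dnm (S : {set vert G}) (F : {set edge G}) : nat := (#|S| - ncomp S F)%N.
Definition dens (S : {set vert G}) (F : {set edge G}) : rat :=
  (#|F|%:R / (dnm S F)%:R)%R.

(* gamma(H) = max d(H') over subgraphs H' of H with nonzero denominator
   (all densities are >= 0, so the default 0 is harmless). *)
Definition gamma (S : {set vert G}) (F : {set edge G}) : rat :=
  (\big[Num.max/0]_(p : {set vert G} * {set edge G} |
      [&& p.1 \subset S, p.2 \subset F, is_subgraph p.1 p.2 & (0 < dnm p.1 p.2)%N])
     dens p.1 p.2)%R.

Definition uniformly_dense (S : {set vert G}) (F : {set edge G}) (k : nat) : Prop :=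
  dens S F = (k%:R)%R /\ gamma S F = (k%:R)%R.

Definition induced (S : {set vert G}) : {set edge G} :=
  [set e | (esrc e \in S) && (edst e \in S)].

Definition kappa'_eq (k : nat) : Prop :=
  (exists F : {set edge G}, #|F| = k /\ ~~ connectedb setT (~: F)) /\
  (forall F : {set edge G}, #|F| < k -> connectedb setT (~: F)).

Definition spanning_tree (T : {set edge G}) : bool :=
  connectedb setT T && [forall e in T, ~~ connectedb setT (T :\ e)].

Definition has_edst (k : nat) : Prop :=
  exists Ts : 'I_k -> {set edge G},
    (forall i, spanning_tree (Ts i)) /\
    (forall i j, i != j -> [disjoint Ts i & Ts j]).

Definition tau_eq (k : nat) : Prop := has_edst k /\ ~ has_edst k.+1.

(* G = G1 *_k G2 with each Gi = K1 or uniformly dense of density k.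
   G1 = G[V1], G2 = G[V \ V1] (the edges of G inside V_i are exactly E(G_i)). *)
Definition K1_or_ud (S : {set vert G}) (k : nat) : Prop :=
  #|S| = 1 \/ uniformly_dense S (induced S) k.

Definition edge_join_decomp (k : nat) : Prop :=
  exists V1 : {set vert G},
    [/\ connectedb V1 (induced V1),
        connectedb (~: V1) (induced (~: V1)),
        #|[set e | ((esrc e \in V1) && (edst e \in ~: V1)) ||
                   ((esrc e \in ~: V1) && (edst e \in V1))]| = k,
        K1_or_ud V1 k &
        K1_or_ud (~: V1) k].

End Defs.

Definition in_F (k : nat) (G : mgraph) : Prop :=
  [/\ 1 < #|vert G|, kappa'_eq G k, tau_eq G k &
      forall G' : mgraph, #|vert G'| = #|vert G| ->
        kappa'_eq G' k -> tau_eq G' k -> #|edge G| <= #|edge G'|].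

(* Main.v *)
Require Import Defs.
From mathcomp Require Import all_boot all_order all_algebra.
From mathcomp Require Import zify.
Set Implicit Arguments. Unset Strict Implicit. Unset Printing Implicit Defensive.

Section Basic.
Variable G : mgraph.
Local Notation V := (vert G).
Local Notation E := (edge G).
Implicit Types (S : {set V}) (F A B : {set E}) (x y u v : V) (e : E).

Lemma adj_sym F : symmetric (adj F).
Proof.
move=> x y; apply/existsP/existsP => -[e /andP[eF h]]; exists e;
by rewrite eF /= orbC.
Qed.

Lemma csym F : connect_sym (adj F).
Proof. exact/sym_connect_sym/adj_sym. Qed.

Lemma ctrans F x y z : connect (adj F) x y -> connect (adj F) y z -> connect (adj F) x z.
Proof. exact: connect_trans. Qed.

Lemma adj_edge F e : e \in F -> adj F (esrc e) (edst e).
Proof. by move=> eF; apply/existsP; exists e; rewrite eF !eqxx. Qed.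

Lemma conn_edge F e : e \in F -> connect (adj F) (esrc e) (edst e).
Proof. by move=> eF; apply: connect1; apply: adj_edge. Qed.

Lemma adjP F x y : reflect (exists2 e, e \in F & (esrc e = x /\ edst e = y) \/ (esrc e = y /\ edst e = x)) (adj F x y).
Proof.
apply: (iffP idP) => [/existsP[e /andP[eF]]|[e eF]].
  by case/orP => /andP[/eqP h1 /eqP h2]; exists e => //; [left|right].
by case=> -[h1 h2]; apply/existsP; exists e; rewrite eF h1 h2 !eqxx ?orbT.
Qed.

Lemma adj_sub F F' : F \subset F' -> subrel (adj F) (adj F').
Proof.
move=> sFF' x y /adjP[e eF h]; apply/adjP; exists e => //.
exact: (subsetP sFF').
Qed.

Lemma conn_sub F F' : F \subset F' -> subrel (connect (adj F)) (connect (adj F')).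
Proof.
move=> s; apply: connect_sub => x y /(adj_sub s) h; exact: connect1.
Qed.

Definition spn F e := connect (adj F) (esrc e) (edst e).

Lemma conn_span F F' : {in F, forall e, spn F' e} ->
  subrel (connect (adj F)) (connect (adj F')).
Proof.
move=> h; apply: connect_sub => x y /adjP[e eF [[<- <-]|[<- <-]]].
  exact: h.
by rewrite csym; apply: h.
Qed.

Lemma grootE F x y : connect (adj F) x y = (fingraph.root (adj F) x == fingraph.root (adj F) y).
Proof. by rewrite root_connect //; apply: csym. Qed.

Lemma conn_setU1 F e x y : connect (adj (e |: F)) x y ->
  let r := fingraph.root (adj F) in
  r x = r y \/ (r x = r (esrc e) /\ r (edst e) = r y) \/
              (r x = r (edst e) /\ r (esrc e) = r y).
Proof.
move=> /connectP[p pth ->] r; elim: p x pth => [|w p IH] x /=.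
  by left.
case/andP=> /adjP[f]; rewrite in_setU1 => /orP[/eqP->|fF] h /IH.
  case: h => -[<- <-]; rewrite /r; intuition congruence.
have: r x = r w.
  by rewrite /r; apply/eqP; rewrite -grootE; case: h => -[<- <-];
     [|rewrite csym]; exact: conn_edge.
intuition congruence.
Qed.

Lemma conn_setU1_span F e : spn F e -> connect (adj (e |: F)) =2 connect (adj F).
Proof.
move=> se x y; apply/idP/idP; last by apply: conn_sub; apply: subsetUr.
apply: conn_span => f; rewrite in_setU1 => /orP[/eqP->//|fF].
exact: conn_edge.
Qed.

End Basic.

Section Count.
Variable G : mgraph.
Local Notation V := (vert G).
Local Notation E := (edge G).
Implicit Types (S : {set V}) (F A B : {set E}) (x y u v : V) (e : E).

Definition rt F := fingraph.root (adj F).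

Lemma rtE F x y : connect (adj F) x y = (rt F x == rt F y).
Proof. exact: grootE. Qed.

Lemma conn_rt F x : connect (adj F) x (rt F x).
Proof. exact: connect_root. Qed.

Lemma rt_rt F x : rt F (rt F x) = rt F x.
Proof. by apply: root_root; apply: csym. Qed.

Lemma ncompE S F : ncomp S F = #|[set rt F x | x in S]|.
Proof.
rewrite /ncomp.
have -> : [set [set y in S | connect (adj F) x y] | x in S] =
   [set (fun r => [set y in S | rt F y == r]) r | r in [set rt F x | x in S]].
  rewrite -imset_comp; apply: eq_imset => x /=; apply/setP => y.
  by rewrite !inE rtE eq_sym.
rewrite card_in_imset // => r1 r2 /imsetP[x1 x1S ->] /imsetP[x2 x2S ->].
by move/setP/(_ x1); rewrite !inE x1S eqxx /= => /esym/eqP.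
Qed.

Lemma ncomp_eq S F F' : connect (adj F) =2 connect (adj F') -> ncomp S F = ncomp S F'.
Proof.
move=> h; rewrite /ncomp.
suff -> : [set [set y in S | connect (adj F) x y] | x in S] =
  [set [set y in S | connect (adj F') x y] | x in S] by [].
by apply: eq_imset => x; apply/setP => y; rewrite !inE h.
Qed.

Lemma rt_sub F F' x : F \subset F' -> rt F' (rt F x) = rt F' x.
Proof.
move=> s; apply/eqP; rewrite -rtE csym; apply: conn_sub s _ _ _.
exact: conn_rt.
Qed.

Lemma ncomp_anti S F F' : F \subset F' -> ncomp S F' <= ncomp S F.
Proof.
move=> s; rewrite !ncompE.
have -> : [set rt F' x | x in S] = [set rt F' r | r in [set rt F x | x in S]].
  by rewrite -imset_comp; apply: eq_imset => x /=; rewrite rt_sub.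
exact: leq_imset_card.
Qed.

Lemma ncomp_le S F : ncomp S F <= #|S|.
Proof. by rewrite ncompE leq_imset_card. Qed.

Lemma ncomp_gt0 S F : S != set0 -> 0 < ncomp S F.
Proof.
case/set0Pn=> x xS; rewrite ncompE card_gt0; apply/set0Pn.
by exists (rt F x); apply: imset_f.
Qed.

Lemma ncomp_span S F e : spn F e -> ncomp S (e |: F) = ncomp S F.
Proof. by move=> h; apply: ncomp_eq; apply: conn_setU1_span. Qed.

Lemma ncomp_nspan S F e : esrc e \in S -> edst e \in S -> ~~ spn F e ->
  ncomp S F = (ncomp S (e |: F)).+1.
Proof.
move=> aS bS ns; rewrite !ncompE.
set a := esrc e; set b := edst e.
set r := rt F; set r' := rt (e |: F); set R := [set r x | x in S].
have s : F \subset e |: F by apply: subsetUr.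
have rab : r a != r b by rewrite -rtE.
have e1 : r' (r b) = r' (r a).
  rewrite /r' /r !rt_sub //; apply/eqP; rewrite -rtE csym; apply: conn_edge.
  by rewrite setU11.
have -> : [set r' x | x in S] = [set r' w | w in R :\ r b].
  apply/eqP; rewrite eqEsubset; apply/andP; split; last first.
    apply/subsetP=> z /imsetP[w]; rewrite !inE => /andP[_ /imsetP[x xS ->]] ->.
    by rewrite /r' /r rt_sub //; apply: imset_f.
  apply/subsetP=> z /imsetP[x xS ->].
  have: r x \in R by apply: imset_f.
  case: (eqVneq (r x) (r b)) => [hb _|hb xR].
    apply/imsetP; exists (r a); first by rewrite in_setD1 rab imset_f.
    by rewrite -e1 -hb /r' /r rt_sub.
  by apply/imsetP; exists (r x); rewrite ?inE ?hb // /r' /r rt_sub.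
rewrite card_in_imset; last first.
  move=> w1 w2; rewrite !inE => /andP[h1 /imsetP[x1 _ E1]] /andP[h2 /imsetP[x2 _ E2]].
  rewrite E1 E2 /r' /r !rt_sub // => /eqP; rewrite -rtE => /conn_setU1 /=.
  rewrite -/r -/a -/b => -[//|[[h3 h4]|[h3 h4]]].
    by move/eqP: h2; rewrite E2 => h; exfalso; apply: h; exact: esym h4.
  by move/eqP: h1; rewrite E1 => h; exfalso; apply: h; exact: h3.
by rewrite (cardsD1 (r b) R) imset_f.
Qed.

Definition forest F := [forall e in F, ~~ spn (F :\ e) e].

Lemma spn_sub F F' e : F \subset F' -> spn F e -> spn F' e.
Proof. by move=> s; apply: conn_sub. Qed.

Lemma forest_sub F F' : F \subset F' -> forest F' -> forest F.
Proof.
move=> s /forall_inP h; apply/forall_inP => e eF.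
apply: contra (h e (subsetP s e eF)); apply: spn_sub.
by apply: setSD.
Qed.

Lemma forest0 : forest set0.
Proof. by apply/forall_inP => e; rewrite inE. Qed.

Lemma ncomp0 S : ncomp S set0 = #|S|.
Proof.
rewrite /ncomp -[RHS](card_in_imset (f := fun x : V => [set x])); last first.
  by move=> x y _ _ /set1_inj.
suff -> : [set [set y in S | connect (adj set0) x y] | x in S] =
  [set [set x] | x in S] by [].
apply: eq_in_imset => x xS; apply/setP => y; rewrite !inE.
apply/andP/eqP => [[_ /connectP[[|z p] /= pth ->]]|->] //.
  by case/andP: pth => /existsP[f]; rewrite inE.
Qed.

Lemma subgraph_sub S F F' : F \subset F' -> is_subgraph S F' -> is_subgraph S F.
Proof.
by move=> s /forall_inP h; apply/forall_inP => e eF; apply: h (subsetP s e eF).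
Qed.

Lemma subgraphP S F e : is_subgraph S F -> e \in F -> (esrc e \in S) && (edst e \in S).
Proof. by move/forall_inP; apply. Qed.

Lemma count_le S F : is_subgraph S F ->
  #|S| <= #|F| + ncomp S F /\ (forest F -> #|S| = #|F| + ncomp S F).
Proof.
move: {2}#|F| (leqnn #|F|) => n; elim: n F => [|n IH] F.
  rewrite leqn0 cards_eq0 => /eqP -> _; rewrite ncomp0 cards0; by [].
move=> hn sg; case: (set_0Vmem F) => [->|[e eF]].
  by rewrite ncomp0 cards0.
have FE : F = e |: (F :\ e) by rewrite setD1K.
have sg' : is_subgraph S (F :\ e) by apply: subgraph_sub sg; apply: subsetDl.
have hn' : #|F :\ e| <= n by move: hn; rewrite (cardsD1 e F) eF.
have cF : #|F| = #|F :\ e|.+1 by rewrite (cardsD1 e F) eF.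
have [IH1 IH2] := IH _ hn' sg'.
have /andP[aS bS] := subgraphP sg eF.
case: (boolP (spn (F :\ e) e)) => sp.
  split; last by move/forall_inP/(_ e eF); rewrite sp.
  by rewrite {2}FE ncomp_span // cF addSn (leq_trans IH1).
move: (ncomp_nspan aS bS sp); rewrite -FE => hc.
split; first by move: IH1; rewrite hc cF addnS addSn.
move=> fo; rewrite IH2 ?hc ?cF ?addnS ?addSn //.
by apply: forest_sub fo; apply: subsetDl.
Qed.

Lemma count_forest S F : is_subgraph S F -> #|F| + ncomp S F = #|S| -> forest F.
Proof.
move=> sg h; apply/forall_inP => e eF; apply/negP => sp.
have sg' : is_subgraph S (F :\ e) by apply: subgraph_sub sg; apply: subsetDl.
have [h1 _] := count_le sg'.
have hc : ncomp S F = ncomp S (F :\ e) by rewrite -{1}(setD1K eF) ncomp_span.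
move: h; rewrite hc (cardsD1 e F) eF => h.
by move: h1; rewrite -h; lia.
Qed.

Lemma conn_ncomp1 S F : connectedb S F -> ncomp S F = 1.
Proof.
case/andP=> /set0Pn[x xS] /forall_inP h; rewrite ncompE.
have -> : [set rt F y | y in S] = [set rt F x].
  apply/setP => z; rewrite inE; apply/imsetP/eqP => [[y yS ->]|->].
    by apply/eqP; rewrite -rtE csym; move/forall_inP: (h x xS); apply.
  by exists x.
by rewrite cards1.
Qed.

Lemma ncomp1_conn S F : S != set0 -> ncomp S F = 1 -> connectedb S F.
Proof.
move=> ne; rewrite ncompE => /eqP/cards1P[r hr].
rewrite /connectedb ne; apply/forall_inP => x xS; apply/forall_inP => y yS.
rewrite rtE.
have: rt F x \in [set r] by rewrite -hr imset_f.
have: rt F y \in [set r] by rewrite -hr imset_f.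
by rewrite !inE => /eqP -> /eqP ->.
Qed.

Lemma ncomp_lt S A : is_subgraph S A -> A != set0 -> ncomp S A < #|S|.
Proof.
move=> sg /set0Pn[e eA].
have /andP[aS bS] := subgraphP sg eA.
have ns : ~~ spn set0 e.
  rewrite /spn; apply/negP => /connectP[[|z p] /= pth].
    by move=> h; move: (loopless e); rewrite -h eqxx.
  by case/andP: pth => /existsP[f]; rewrite inE.
have := ncomp_nspan aS bS ns; rewrite ncomp0 setU0 => ->.
have := @ncomp_anti S [set e] A; rewrite sub1set eA => /(_ isT); lia.
Qed.

End Count.

Lemma bigcup_seqP (I T : finType) (A : I -> {set T}) (r : seq I) x :
  x \in \bigcup_(i <- r) A i -> exists2 j, j \in r & x \in A j.
Proof.
elim: r => [|i r IH]; first by rewrite big_nil inE.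
rewrite big_cons inE => /orP[xi|/IH[j jr xj]]; first by exists i; rewrite ?inE ?eqxx.
by exists j; rewrite // inE jr orbT.
Qed.

Lemma card_bigcup_seq (I T : finType) (A : I -> {set T}) (r : seq I) :
  uniq r -> (forall i j x, x \in A i -> x \in A j -> i = j) ->
  #|\bigcup_(i <- r) A i| = \sum_(i <- r) #|A i|.
Proof.
move=> ur hd; elim: r ur => [|i r IH] /=; first by rewrite !big_nil cards0.
case/andP=> ir ur; rewrite !big_cons cardsU IH //.
suff -> : A i :&: \bigcup_(j <- r) A j = set0 by rewrite cards0 subn0.
apply/setP => x; rewrite !inE; apply/negP => /andP[xi /bigcup_seqP[j jr xj]].
by move: ir; rewrite (hd _ _ _ xi xj) jr.
Qed.

Lemma card_bigcup (I T : finType) (A : I -> {set T}) :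
  (forall i j x, x \in A i -> x \in A j -> i = j) ->
  #|\bigcup_i A i| = \sum_i #|A i|.
Proof. by move=> hd; apply: card_bigcup_seq => //; apply: index_enum_uniq. Qed.

Section Forest.
Variable G : mgraph.
Local Notation V := (vert G).
Local Notation E := (edge G).
Implicit Types (S : {set V}) (F A B J : {set E}) (x y u v : V) (e : E).

Lemma forestU1 J e : forest J -> e \notin J -> forest (e |: J) = ~~ spn J e.
Proof.
move=> fJ eJ; apply/idP/idP.
  by move/forall_inP/(_ e (setU11 _ _)); rewrite setU1K.
move=> ns; apply/forall_inP => f; rewrite in_setU1 => /orP[/eqP->|fJ'].
  by rewrite setU1K.
have fe : f != e by apply: contraNneq eJ => <-.
have -> : (e |: J) :\ f = e |: (J :\ f).
  apply/setP => z; rewrite !inE; case: (eqVneq z e) => // ->.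
  by rewrite eq_sym (negbTE fe).
rewrite /spn; apply/negP => /conn_setU1 /=.
have /forall_inP/(_ f fJ') := fJ; rewrite /spn grootE => /negP h.
have sJ := subsetDl J [set f].
have ef : connect (adj J) (esrc f) (edst f) by apply: conn_edge.
case=> [/eqP//|[[h1 h2]|[h1 h2]]]; apply/negP: ns; rewrite /spn negbK.
  have c1 : connect (adj (J :\ f)) (esrc f) (esrc e) by rewrite grootE h1.
  have c2 : connect (adj (J :\ f)) (edst e) (edst f) by rewrite grootE h2.
  have d1 : connect (adj J) (esrc e) (esrc f) by rewrite csym; apply: (conn_sub sJ).
  have d2 : connect (adj J) (edst f) (edst e) by rewrite csym; apply: (conn_sub sJ).
  exact: connect_trans (connect_trans d1 ef) d2.
have c1 : connect (adj (J :\ f)) (esrc f) (edst e) by rewrite grootE h1.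
have c2 : connect (adj (J :\ f)) (esrc e) (edst f) by rewrite grootE h2.
have d1 : connect (adj J) (esrc e) (edst f) by apply: (conn_sub sJ).
have d2 : connect (adj J) (esrc f) (edst e) by apply: (conn_sub sJ).
rewrite csym in ef; exact: connect_trans (connect_trans d1 ef) d2.
Qed.


Lemma spn_mem F e : e \in F -> spn F e.
Proof. exact: conn_edge. Qed.

Lemma spn_forestU1 J e : forest J -> e \notin J -> ~~ forest (e |: J) -> spn J e.
Proof. by move=> fJ eJ; rewrite forestU1 // negbK. Qed.

Lemma augment S A B : is_subgraph S A -> is_subgraph S B -> forest A -> forest B ->
  #|A| < #|B| -> exists2 b, b \in B :\: A & forest (b |: A).
Proof.
move=> sA sB fA fB lt.
case: (boolP [exists b in B :\: A, forest (b |: A)]).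
  by case/exists_inP=> b bB fb; exists b.
move/exists_inPn => h.
have sp : {in A :|: B, forall e, spn A e}.
  move=> e; rewrite in_setU => /orP[eA|eB]; first exact: spn_mem.
  case: (boolP (e \in A)) => eA; first exact: spn_mem.
  by apply: spn_forestU1 => //; apply: h; rewrite inE eA.
have ce : connect (adj (A :|: B)) =2 connect (adj A).
  move=> x y; apply/idP/idP; first exact: conn_span.
  by apply: conn_sub; apply: subsetUl.
have n1 : ncomp S A <= ncomp S B.
  by rewrite -(ncomp_eq S ce); apply: ncomp_anti; apply: subsetUr.
have [_ /(_ fA) eA] := count_le sA.
have [_ /(_ fB) eB] := count_le sB.
lia.
Qed.

Lemma max_ext A (X : {set E}) : forest A -> A \subset X ->
  exists M : {set E}, [/\ A \subset M, M \subset X, forest M &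
              forall f, f \in X -> f \notin M -> ~~ forest (f |: M)].
Proof.
move: {2}#|X :\: A| (leqnn #|X :\: A|) => n; elim: n A => [|n IH] A.
  rewrite leqn0 cards_eq0 => /eqP h fA sAX; exists A; split => //.
  by move=> y yX yA; move/setP/(_ y): h; rewrite !inE yA yX.
move=> hn fA sAX.
case: (boolP [exists y in X :\: A, forest (y |: A)]); last first.
  move/exists_inPn => h; exists A; split => // y yX yA.
  by apply: h; rewrite inE yA.
case/exists_inP=> y; rewrite inE => /andP[yA yX] fy.
have [|||M [h1 h2 h3 h4]] := IH (y |: A).
- move: hn; rewrite (cardsD1 y (X :\: A)) !inE yA yX /=.
  suff -> : X :\: (y |: A) = (X :\: A) :\ y by [].
  by apply/setP => z; rewrite !inE negb_or andbA.
- exact: fy.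
- by rewrite subUset sub1set yX.
exists M; split => //; apply: subset_trans h1; apply: subsetUr.
Qed.

Lemma tree_conn_span (T : {set E}) e : connectedb setT T -> e \in T ->
  connectedb setT (T :\ e) = spn (T :\ e) e.
Proof.
move=> cT eT; apply/idP/idP.
  by case/andP=> _ /forall_inP/(_ (esrc e) (in_setT _))/forall_inP/(_ (edst e) (in_setT _)).
move=> sp; have ce := conn_setU1_span sp; rewrite setD1K // in ce.
case/andP: cT => ne /forall_inP h; rewrite /connectedb ne.
apply/forall_inP => x _; apply/forall_inP => y _; rewrite -ce.
by move/forall_inP: (h x (in_setT _)); apply.
Qed.

Lemma spanning_treeE (T : {set E}) : spanning_tree T = connectedb setT T && forest T.
Proof.
rewrite /spanning_tree; case: (boolP (connectedb setT T)) => //= cT.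
apply/forall_inP/forall_inP => h e eT; move: (h e eT).
  by rewrite tree_conn_span.
by rewrite tree_conn_span.
Qed.

Lemma subgraphT F : is_subgraph setT F.
Proof. by apply/forall_inP => e _; rewrite !inE. Qed.

Lemma conn_card F : connectedb setT F -> #|V| <= #|F|.+1.
Proof.
move=> cF; have [h _] := count_le (subgraphT F).
by move: h; rewrite conn_ncomp1 // cardsT addn1.
Qed.

Lemma tree_card (T : {set E}) : spanning_tree T -> #|T|.+1 = #|V|.
Proof.
rewrite spanning_treeE => /andP[cT fT]; have [_ h] := count_le (subgraphT T).
by rewrite -cardsT (h fT) conn_ncomp1 // addn1.
Qed.

End Forest.

Section Partition.
Variable G : mgraph.
Local Notation V := (vert G).
Local Notation E := (edge G).
Variable k : nat.
Implicit Types (S : {set V}) (F A B J Y U : {set E}) (e a b z : E) (Is : 'I_k -> {set E}).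

Lemma keyspan Y J a z : J \subset Y -> spn Y a -> forest Y -> forest (a |: J) ->
  a \notin J -> z \notin a |: J -> z \notin Y -> forest (z |: Y) -> forest (z |: (a |: J)).
Proof.
move=> sJY sa fY faJ aJ zaJ zY fzY; rewrite forestU1 //.
apply/negP => sz; move: fzY; rewrite forestU1 // => /negP; apply.
apply: conn_span sz => f; rewrite in_setU1 => /orP[/eqP->//|fJ].
by apply: spn_mem; apply: (subsetP sJY).
Qed.

Definition dec Is U :=
  [/\ forall i, forest (Is i), forall i j e, e \in Is i -> e \in Is j -> i = j &
      forall e, (e \in U) = [exists i, e \in Is i]].

Definition arc Is c a b := [&& b \in Is c, a \notin Is c & forest (a |: (Is c :\ b))].
Definition free Is c a := (a \notin Is c) && forest (a |: Is c).
Fixpoint good Is a d := match d with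
  | 0 => [exists c, free Is c a]
  | d'.+1 => good Is a d' || [exists c, [exists b, arc Is c a b && good Is b d']]
  end.

Definition upd Is c X := fun j => if j == c then X else Is j.

Lemma transfer Is c x b : (forall i, forest (Is i)) -> arc Is c x b ->
  forall m z, good Is z m -> ~~ good Is x m -> good (upd Is c (x |: (Is c :\ b))) z m.
Proof.
move=> fI /and3P[hb hx hf]; elim=> [|m IH] z /=.
  case/existsP=> c' fz /existsPn nx; apply/existsP; exists c'.
  move: fz; rewrite /free /upd /=; case: (eqVneq c' c) => [->|//] fz.
  case/andP: fz => zc fzc.
  have zx : z != x by apply/eqP => ezx; move: (nx c); rewrite -ezx /free zc fzc.
  have nfx : ~~ forest (x |: Is c) by move: (nx c); rewrite /free hx.
  apply/andP; split; first by rewrite !inE negb_or zx negb_and zc orbT.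
  apply: (keyspan (Y := Is c)) => //.
  - exact: subsetDl.
  - exact: spn_forestU1.
  - by rewrite inE negb_and hx orbT.
  - by rewrite !inE negb_or zx negb_and zc orbT.
case/orP=> [gz|/existsP[c' /existsP[b' /andP[az gb]]]];
  rewrite negb_or => /andP[ngx /existsPn nx].
  by rewrite IH.
apply/orP; right; apply/existsP; exists c'; apply/existsP; exists b'.
rewrite IH //; rewrite andbT.
move: az; rewrite /arc /upd /=; case: (eqVneq c' c) => [->|//].
case/and3P=> hb' zc fz.
have nab' : ~~ arc Is c x b'.
  by apply: contra (nx c) => h; apply/existsP; exists b'; rewrite h gb.
have nfx : ~~ forest (x |: (Is c :\ b')) by move: nab'; rewrite /arc hb' hx.
have bb : b' != b by apply: contraNneq nab' => ->; rewrite /arc hb hx hf.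
have zx : z != x.
  apply: contraNneq ngx => ezx; subst z; exfalso.
  by move/existsP: (nx c); apply; exists b'; rewrite /arc hb' zc fz gb.
have xb : x != b' by apply: contraNneq hx => ->.
rewrite !inE bb hb' /= negb_or zx negb_and zc orbT /=.
have -> : (x |: (Is c :\ b)) :\ b' = x |: ((Is c :\ b) :\ b').
  by apply/setP => f; rewrite !inE; case: (eqVneq f x) => // ->; rewrite xb.
have fc := fI c.
rewrite ?orbT /=; apply: (keyspan (Y := Is c :\ b')).
- by apply: setSD; apply: subsetDl.
- apply: spn_forestU1 => //; first by apply: forest_sub fc; apply: subsetDl.
  by rewrite inE negb_and hx orbT.
- by apply: forest_sub fc; apply: subsetDl.
- apply: forest_sub hf; apply: setUS; apply: subsetDl.
- by rewrite !inE (negbTE hx) !andbF.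
- by rewrite !inE (negbTE zx) (negbTE zc) !andbF.
- by rewrite !inE (negbTE zc) andbF.
- exact: fz.
Qed.

Lemma dec_upd Is U c X U' : dec Is U -> forest X ->
  (forall e j, e \in X -> j != c -> e \notin Is j) ->
  (forall e, (e \in U') = (e \in X) || [exists j, (j != c) && (e \in Is j)]) ->
  dec (upd Is c X) U'.
Proof.
move=> [fI dI mI] fX dX mU; split.
- by move=> i; rewrite /upd; case: eqVneq.
- move=> i j e; rewrite /upd; case: (eqVneq i c) => [->|ic]; case: (eqVneq j c) => [->|jc] //.
  + by move=> eX eJ; move: (dX e j eX jc); rewrite eJ.
  + by move=> eI eX; move: (dX e i eX ic); rewrite eI.
  + exact: dI.
- move=> e; rewrite mU; apply/idP/existsP => [/orP[eX|/existsP[j /andP[jc ej]]]|[j]].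
  + by exists c; rewrite /upd eqxx.
  + by exists j; rewrite /upd (negbTE jc).
  rewrite /upd; case: eqVneq => [_ ->//|jc ej].
  by apply/orP; right; apply/existsP; exists j; rewrite jc.
Qed.

Lemma aug d : forall Is U x, dec Is U -> x \notin U -> good Is x d ->
  exists Is', dec Is' (x |: U).
Proof.
elim: d => [|d IH] Is U x hd xU /=.
  case/existsP=> c /andP[xc fx]; exists (upd Is c (x |: Is c)).
  case: (hd) => fI dI mI.
  apply: dec_upd => //.
  - move=> e j; rewrite in_setU1 => /orP[/eqP->|ec] jc.
      by apply: contra xU => xj; rewrite mI; apply/existsP; exists j.
    by apply/negP => ej; move: jc; rewrite (dI _ _ _ ec ej) eqxx.
  - move=> e; rewrite !in_setU1 mI; case: (e == x) => //=.
    apply/existsP/idP => [[j ej]|].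
      case: (eqVneq j c) => [ejc|jc]; first by rewrite -ejc ej.
      by apply/orP; right; apply/existsP; exists j; rewrite jc.
    by case/orP=> [ec|/existsP[j /andP[_ ej]]]; [exists c|exists j].
case/orP=> [gx|/existsP[c /existsP[b /andP[ab gb]]]]; first exact: IH gx.
case: (boolP (good Is x d)) => [gx|ngx]; first exact: IH gx.
case: (hd) => fI dI mI.
have /and3P[hb hx hf] := ab.
pose Is' := upd Is c (x |: (Is c :\ b)).
have bU : b \in U by rewrite mI; apply/existsP; exists c.
have bx : b != x by apply: contraNneq hx => <-.
have hd' : dec Is' (x |: (U :\ b)).
  apply: dec_upd => //.
  - move=> e j; rewrite !inE => /orP[/eqP->|/andP[_ ec]] jc.
      by apply: contra xU => xj; rewrite mI; apply/existsP; exists j.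
    by apply/negP => ej; move: jc; rewrite (dI _ _ _ ec ej) eqxx.
  - move=> e; rewrite !inE mI; case: (eqVneq e x) => //= ex.
    case: (eqVneq e b) => [->|eb] /=.
      apply/esym/negbTE/negP => /existsP[j /andP[jc bj]].
      by move: jc; rewrite (dI _ _ _ bj hb) eqxx.
    apply/existsP/orP => [[j ej]|[ec|/existsP[j /andP[jc ej]]]]; [|by exists c|by exists j].
    case: (eqVneq j c) => [ejc|jc]; first by left; rewrite -ejc.
    by right; apply/existsP; exists j; rewrite jc.
have gb' : good Is' b d by apply: transfer.
have bU' : b \notin x |: (U :\ b) by rewrite !inE (negbTE bx) eqxx.
have [Is'' h] := IH Is' _ b hd' bU' gb'.
exists Is''; suff <- : b |: (x |: (U :\ b)) = x |: U by [].
apply/setP => f; rewrite !inE; case: (eqVneq f b) => [->|]; first by rewrite bU orbT.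
by rewrite /=.
Qed.


Section NoAug.
Variables (S : {set V}) (E0 : {set E}).
Hypothesis hsg : is_subgraph S E0.
Hypothesis hyp : forall A, A \subset E0 -> #|A| <= k * (#|S| - ncomp S A).

Lemma reach_good Is x (p : seq E) d :
  path [rel a b | [exists c, arc Is c a b]] x p -> good Is (last x p) d ->
  exists d', good Is x d'.
Proof.
elim: p x d => [|w p IH] x d /=; first by exists d.
case/andP=> /existsP[c axw] pth /(IH _ _ pth) [d' gw].
by exists d'.+1; apply/orP; right; apply/existsP; exists c; apply/existsP; exists w; rewrite axw.
Qed.

Lemma noaug Is U x : dec Is U -> x \notin U -> x |: U \subset E0 ->
  exists d, good Is x d.
Proof.
move=> [fI dI mI] xU sE0.
pose ar := [rel a b | [exists c, arc Is c a b]].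
pose R := [set z | connect ar x z].
have xR : x \in R by rewrite inE connect0.
case: (boolP [exists z in R, exists c, free Is c z]).
  case/exists_inP=> z; rewrite inE => /connectP[p pth ->] /existsP[c fz].
  by apply: (@reach_good Is x p 0) => //=; apply/existsP; exists c.
move/exists_inPn => nfree0; exfalso.
have nfree : forall z c, z \in R -> ~~ free Is c z.
  by move=> z c zR; move/existsPn: (nfree0 z zR); apply.
have RU : R \subset x |: U.
  apply/subsetP => z; rewrite inE => /connectP[p pth ->].
  elim/last_ind: p pth => [|p w _]; first by rewrite setU11.
  rewrite rcons_path last_rcons => /andP[_ /existsP[c /and3P[wc _ _]]].
  by rewrite in_setU1 mI; apply/orP; right; apply/existsP; exists c.
have IsU : forall c, Is c \subset U.
  by move=> c; apply/subsetP => e ec; rewrite mI; apply/existsP; exists c.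
have UE0 : U \subset E0 by apply: subset_trans sE0; apply: subsetUr.
have RE0 : R \subset E0 by apply: subset_trans RU sE0.
have spanR : forall c z, z \in R -> spn (Is c :&: R) z.
  move=> c z zR; case: (boolP (z \in Is c)) => zc.
    by apply: spn_mem; rewrite inE zc zR.
  apply/negPn/negP => nsp.
  have fIR : forest (Is c :&: R) by apply: forest_sub (fI c); apply: subsetIl.
  have zIR : z \notin Is c :&: R by rewrite inE (negbTE zc).
  have fA : forest (z |: (Is c :&: R)) by rewrite forestU1.
  have sAX : z |: (Is c :&: R) \subset z |: Is c by apply: setUS; apply: subsetIl.
  have [M [h1 h2 h3 h4]] := max_ext fA sAX.
  have zE0 : z \in E0 by apply: (subsetP RE0).
  have XE0 : z |: Is c \subset E0.
    by rewrite subUset sub1set zE0 (subset_trans (IsU c) UE0).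
  have nfz : ~~ forest (z |: Is c) by move: (nfree z c zR); rewrite /free zc.
  have zM : z \in M by apply: (subsetP h1); apply: setU11.
  have cM : #|Is c| <= #|M|.
    rewrite leqNgt; apply/negP => lt.
    have [||b] := augment (S := S) _ _ h3 (fI c) lt.
    - exact: subgraph_sub (subset_trans h2 XE0) hsg.
    - exact: subgraph_sub (subset_trans (IsU c) UE0) hsg.
    rewrite inE => /andP[bM bc] fb.
    by move: (h4 b); rewrite inE bc orbT bM fb => /(_ isT isT).
  case: (boolP [exists w in Is c, w \notin M]) => [/exists_inP[w wc wM]|/exists_inPn h]; last first.
    have XM : z |: Is c \subset M.
      apply/subsetP => f; rewrite in_setU1 => /orP[/eqP->//|fc].
      by move: (h f fc); rewrite negbK.
    have : M = z |: Is c by apply/eqP; rewrite eqEsubset h2 XM.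
    by move=> eM; move: h3; rewrite eM (negbTE nfz).
  have zw : z != w by apply: contraNneq zc => ->.
  have Mw : M = z |: (Is c :\ w).
    apply/eqP; rewrite eqEcard; apply/andP; split.
      apply/subsetP => f fM; move: (subsetP h2 f fM); rewrite !inE.
      case: (eqVneq f z) => //= fz fc; rewrite fc andbT.
      by apply: contraNneq wM => <-.
    rewrite cardsU1 !inE (negbTE zc) andbF /=.
    by move: cM; rewrite (cardsD1 w (Is c)) wc.
  have awz : arc Is c z w by rewrite /arc wc zc -Mw h3.
  have wR : w \in R.
    rewrite inE; apply: connect_trans (_ : connect ar x z) _.
      by move: zR; rewrite inE.
    by apply: connect1 => /=; apply/existsP; exists c.
  by move: wM; rewrite (subsetP h1) // in_setU1 in_setI wc wR orbT.
have cR : forall c, #|Is c :&: R| = #|S| - ncomp S R.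
  move=> c.
  have ce : connect (adj R) =2 connect (adj (Is c :&: R)).
    move=> a b; apply/idP/idP; last by apply: conn_sub; apply: subsetIr.
    by apply: conn_span => z zR; apply: spanR.
  have sg : is_subgraph S (Is c :&: R).
    by apply: subgraph_sub hsg; apply: subset_trans RE0; apply: subsetIr.
  have [_ /(_ (forest_sub (subsetIl _ _) (fI c))) h] := count_le sg.
  by rewrite (ncomp_eq S ce) h addnK.
have hR := hyp RE0.
have : \sum_(c < k) #|Is c :&: R| = #|U :&: R|.
  rewrite -card_bigcup; last first.
    by move=> i j e; rewrite !inE => /andP[ei _] /andP[ej _]; apply: dI ei ej.
  apply: eq_card => e; rewrite inE mI; apply/bigcupP/andP.
    by case=> i _; rewrite inE => /andP[ei eR]; split => //; apply/existsP; exists i.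
  by case=> /existsP[i ei] eR; exists i => //; rewrite inE ei.
under eq_bigr do rewrite cR.
rewrite sum_nat_const card_ord => hs.
have : #|U :&: R| < #|R|.
  apply: proper_card; rewrite properEneq subsetIr andbT.
  by apply/eqP => /setP/(_ x); rewrite in_setI xR (negbTE xU).
lia.
Qed.

Lemma forest_partition U : U \subset E0 -> exists Is, dec Is U.
Proof.
move: {2}#|U| (leqnn #|U|) => n; elim: n U => [|n IH] U.
  rewrite leqn0 cards_eq0 => /eqP -> _; exists (fun _ => set0); split.
  - by move=> i; apply: forest0.
  - by move=> i j e; rewrite inE.
  - by move=> e; rewrite in_set0; apply/esym/existsPn => i /=.
move=> hn sU; case: (set_0Vmem U) => [->|[x xU]].
  by apply: IH; rewrite ?cards0 ?sub0set.
have hn' : #|U :\ x| <= n by move: hn; rewrite (cardsD1 x U) xU.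
have [Is hd] := IH _ hn' (subset_trans (subsetDl U [set x]) sU).
have xU' : x \notin U :\ x by rewrite !inE eqxx.
have eU : x |: (U :\ x) = U by rewrite setD1K.
have [d gd] : exists d, good Is x d by apply: (noaug hd xU'); rewrite eU.
have [Is' h] := aug hd xU' gd.
by exists Is'; rewrite -eU.
Qed.

End NoAug.

End Partition.

Import Order.TTheory GRing.Theory Num.Theory.

Lemma cardsUD (T : finType) (A B : {set T}) : A :&: B = set0 -> #|A :|: B| = #|A| + #|B|.
Proof. by move=> h; rewrite cardsU h cards0 subn0. Qed.

Lemma sum_eq_le (k m : nat) (f : 'I_k -> nat) : (forall i, f i <= m) ->
  \sum_(i < k) f i = k * m -> forall i, f i = m.
Proof.
move=> hf hs i; apply/eqP; rewrite eqn_leq hf /=; rewrite leqNgt; apply/negP => lt.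
have : \sum_(j < k) f j < k * m.
  rewrite (bigD1 i) //=.
  have : \sum_(j < k | j != i) f j <= \sum_(j < k | j != i) m by apply: leq_sum => j _.
  rewrite sum_nat_const cardC1 card_ord.
  case: k i f hf hs lt => [[]//|k] i f hf hs lt /=; rewrite mulSn.
  move: (\sum_(j < k.+1 | j != i) f j) => s; lia.
by rewrite hs ltnn.
Qed.

Lemma sum_eq_ge (k m : nat) (f : 'I_k -> nat) : (forall i, m <= f i) ->
  \sum_(i < k) f i = k * m -> forall i, f i = m.
Proof.
move=> hf hs i; apply/eqP; rewrite eqn_leq hf andbT; rewrite leqNgt; apply/negP => lt.
have : k * m < \sum_(j < k) f j.
  rewrite (bigD1 i) //=.
  have : \sum_(j < k | j != i) m <= \sum_(j < k | j != i) f j by apply: leq_sum => j _.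
  rewrite sum_nat_const cardC1 card_ord.
  case: k i f hf hs lt => [[]//|k] i f hf hs lt /=; rewrite mulSn.
  move: (\sum_(j < k.+1 | j != i) f j) => s; lia.
by rewrite hs ltnn.
Qed.

Section Gen.
Variable G : mgraph.
Local Notation V := (vert G).
Local Notation E := (edge G).
Implicit Types (S W : {set V}) (F A B : {set E}) (x y u v : V) (e : E).

Lemma cclosure W F u w : (forall a b, a \in W -> adj F a b -> b \in W) ->
  u \in W -> connect (adj F) u w -> w \in W.
Proof.
move=> hW uW /connectP[p pth ->]; elim: p u uW pth => [|z p IH] u uW //=.
by case/andP=> a pth; apply: IH pth; apply: hW a.
Qed.

Lemma conn_subT F F' S : F \subset F' -> connectedb S F -> connectedb S F'.
Proof.
move=> s /andP[ne /forall_inP h]; rewrite /connectedb ne; apply/forall_inP => x xS.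
apply/forall_inP => y yS; apply: conn_sub s _ _ _.
by move/forall_inP: (h x xS); apply.
Qed.

Lemma edst_card k : has_edst G k -> k * #|V|.-1 <= #|E|.
Proof.
case=> Ts [hT hd].
have dI : forall i j e, e \in Ts i -> e \in Ts j -> i = j.
  move=> i j e ei ej; apply/eqP; apply/negP => /negP ij.
  by move: (disjointFr (hd i j ij) ei); rewrite ej.
have := card_bigcup dI.
have -> : \sum_i #|Ts i| = \sum_(i < k) #|V|.-1.
  by apply: eq_bigr => i _; rewrite -(tree_card (hT i)).
rewrite sum_nat_const card_ord => <-.
by rewrite -cardsT subset_leq_card // subsetT.
Qed.

Lemma edst_conn k F : has_edst G k -> #|F| < k -> connectedb setT (~: F).
Proof.
case=> Ts [hT hd] hF.
have dI : forall i j e, e \in Ts i :&: F -> e \in Ts j :&: F -> i = j.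
  move=> i j e /setIP[ei _] /setIP[ej _]; apply/eqP; apply/negP => /negP ij.
  by move: (disjointFr (hd i j ij) ei); rewrite ej.
case: (boolP [exists i, Ts i :&: F == set0]) => [/existsP[i /eqP h]|/existsPn h].
  apply: conn_subT (_ : Ts i \subset _) _; last by move: (hT i); rewrite spanning_treeE => /andP[].
  apply/subsetP => e ei; rewrite inE; apply/negP => eF.
  by move/setP/(_ e): h; rewrite inE ei eF inE.
have := card_bigcup dI.
have : \sum_(i < k) 1 <= \sum_i #|Ts i :&: F|.
  by apply: leq_sum => i _; rewrite card_gt0; apply: h.
rewrite sum_nat_const card_ord muln1 => h1 h2.
have : #|\bigcup_i (Ts i :&: F)| <= #|F|.
  by apply: subset_leq_card; apply/bigcupsP => i _; apply: subsetIr.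
lia.
Qed.

End Gen.

Section Dens.
Variable G : mgraph.
Local Notation V := (vert G).
Local Notation E := (edge G).
Implicit Types (S W : {set V}) (F A B : {set E}) (x y u v : V) (e : E).

Lemma dens_pos_eq S F k : 0 < k -> dens S F = (k%:R)%R ->
  0 < dnm S F /\ #|F| = k * dnm S F.
Proof.
move=> k0; rewrite /dens; case: (posnP (dnm S F)) => [->|pos].
  rewrite GRing.invr0 GRing.mulr0 => /eqP; rewrite eq_sym pnatr_eq0.
  by case: k k0.
move=> h; split => //; move: h; move/(congr1 (fun r : rat => r * (dnm S F)%:R)%R).
rewrite divfK ?pnatr_eq0 -?lt0n // -natrM => /eqP; rewrite eqr_nat => /eqP.
by rewrite mulnC.
Qed.

Lemma dens_eq S F k : 0 < dnm S F -> #|F| = k * dnm S F -> dens S F = (k%:R)%R.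
Proof.
by move=> pos h; rewrite /dens h natrM mulfK // pnatr_eq0 -lt0n.
Qed.

Lemma dens_le S F k : 0 < dnm S F -> #|F| <= k * dnm S F -> (dens S F <= k%:R)%R.
Proof. by move=> pos h; rewrite /dens ler_pdivrMr ?ltr0n // -natrM ler_nat. Qed.

Lemma gamma_le S F k :
  (forall p : {set V} * {set E}, [&& p.1 \subset S, p.2 \subset F, is_subgraph p.1 p.2 &
     0 < dnm p.1 p.2] -> #|p.2| <= k * dnm p.1 p.2) -> (gamma S F <= k%:R)%R.
Proof.
move=> h; rewrite /gamma; apply/bigmax_leP; split; first exact: ler0n.
move=> p hp; apply: dens_le; last exact: h.
by case/and4P: hp.
Qed.

Lemma gamma_ge S F (p : {set V} * {set E}) :
  [&& p.1 \subset S, p.2 \subset F, is_subgraph p.1 p.2 & 0 < dnm p.1 p.2] ->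
  (dens p.1 p.2 <= gamma S F)%R.
Proof. by move=> hp; rewrite /gamma; apply: le_bigmax_cond. Qed.

Lemma cover_bound k (T : 'I_k -> {set E}) : (forall i, forest (T i)) ->
  (forall i j e, e \in T i -> e \in T j -> i = j) -> (forall e, [exists i, e \in T i]) ->
  forall S A, is_subgraph S A -> #|A| <= k * (#|S| - ncomp S A).
Proof.
move=> fT dT cT S A sg.
have dI : forall i j e, e \in A :&: T i -> e \in A :&: T j -> i = j.
  by move=> i j e /setIP[_ ei] /setIP[_ ej]; apply: dT ei ej.
have -> : #|A| = #|\bigcup_i (A :&: T i)|.
  apply: eq_card => e; apply/idP/bigcupP => [eA|[i _ /setIP[]//]].
  by case/existsP: (cT e) => i ei; exists i => //; rewrite inE eA.
have -> : k * (#|S| - ncomp S A) = \sum_(i < k) (#|S| - ncomp S A).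
  by rewrite sum_nat_const card_ord.
rewrite card_bigcup //.
apply: leq_sum => i _.
have sg' : is_subgraph S (A :&: T i) by apply: subgraph_sub sg; apply: subsetIl.
have [_ /(_ (forest_sub (subsetIr _ _) (fT i))) h] := count_le sg'.
have := ncomp_anti S (subsetIl A (T i)); lia.
Qed.

Lemma ind_sub W : is_subgraph W (induced W).
Proof. by apply/forall_inP => e; rewrite inE. Qed.

Lemma ind_card1 W : #|W| = 1 -> induced W = set0.
Proof.
case/eqP/cards1P=> x ->; apply/setP => e; rewrite !inE.
apply/negP => /andP[/eqP a /eqP b]; move: (loopless e); by rewrite a b eqxx.
Qed.

Lemma conn_card1 W F : #|W| = 1 -> connectedb W F.
Proof.
case/eqP/cards1P=> x ->; rewrite /connectedb; apply/andP; split.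
  by apply/set0Pn; exists x; rewrite inE.
apply/forall_inP => a; rewrite inE => /eqP->; apply/forall_inP => b.
by rewrite inE => /eqP->; apply: connect0.
Qed.

End Dens.

Import Order.TTheory GRing.Theory Num.Theory.

Section Side.
Variable G : mgraph.
Local Notation V := (vert G).
Local Notation E := (edge G).
Implicit Types (S W : {set V}) (F A B : {set E}) (x y u v : V) (e : E).
Variable k : nat.
Hypothesis k0 : 0 < k.

Definition trees_of W (Is : 'I_k -> {set E}) :=
  [/\ forall i, forest (Is i), forall i j e, e \in Is i -> e \in Is j -> i = j,
      forall e, (e \in induced W) = [exists i, e \in Is i] &
      forall i, connectedb W (Is i)].

Lemma trees_card W Is : trees_of W Is -> #|induced W| = k * (#|W| - 1).
Proof.
case=> fI dI mI cI.
have -> : #|induced W| = #|\bigcup_i Is i|.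
  by apply: eq_card => e; rewrite mI; apply/existsP/bigcupP => [[i ei]|[i _ ei]]; exists i.
rewrite card_bigcup // -[in RHS](card_ord k) -sum_nat_const; apply: eq_bigr => i _.
have sg : is_subgraph W (Is i).
  apply/forall_inP => e ei; have : e \in induced W by rewrite mI; apply/existsP; exists i.
  by rewrite inE.
have [_ /(_ (fI i)) h] := count_le sg.
by rewrite h conn_ncomp1 // addnK.
Qed.

Lemma side_trees W : connectedb W (induced W) -> K1_or_ud W k ->
  exists Is, trees_of W Is.
Proof.
move=> cW [h1|[hd hg]].
  exists (fun _ => set0); split.
  - by move=> i; apply: forest0.
  - by move=> i j e; rewrite inE.
  - by move=> e; rewrite ind_card1 // in_set0; apply/esym/existsPn => i /=.
  - by move=> i; apply: conn_card1.
have [pos hc] := dens_pos_eq k0 hd.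
have nc1 := conn_ncomp1 cW.
have Wne : W != set0 by case/andP: cW.
have hyp : forall A, A \subset induced W -> #|A| <= k * (#|W| - ncomp W A).
  move=> A sA; case: (eqVneq A set0) => [->|ne]; first by rewrite cards0.
  have sg : is_subgraph W A := subgraph_sub sA (ind_sub W).
  have dpos : 0 < dnm W A by rewrite /dnm subn_gt0 ncomp_lt.
  have := gamma_ge (S := W) (F := induced W) (p := (W, A)).
  rewrite /= subxx sA sg dpos hg => /(_ isT).
  by rewrite /dens ler_pdivrMr ?ltr0n // -natrM ler_nat.
have [Is [fI dI mI]] := forest_partition (ind_sub W) hyp (subxx _).
have sg : forall i, is_subgraph W (Is i).
  move=> i; apply/forall_inP => e ei; have : e \in induced W by rewrite mI; apply/existsP; exists i.
  by rewrite inE.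
have le : forall i, #|Is i| <= #|W| - 1.
  move=> i; have [_ /(_ (fI i)) h] := count_le (sg i).
  have := ncomp_gt0 (Is i) Wne; lia.
have sum : \sum_(i < k) #|Is i| = k * (#|W| - 1).
  have hcW : #|induced W| = k * (#|W| - 1) by rewrite hc /dnm nc1.
  rewrite -card_bigcup // -hcW.
  by apply: eq_card => e; rewrite mI; apply/bigcupP/existsP => [[i _ ei]|[i ei]]; exists i.
have eq := sum_eq_le le sum.
exists Is; split => // i; apply: ncomp1_conn => //.
have [_ /(_ (fI i)) h] := count_le (sg i).
move: (eq i) (ncomp_gt0 (Is i) Wne) (ncomp_le W (Is i)); lia.
Qed.

End Side.

Import Order.TTheory GRing.Theory Num.Theory.

Section Conv.
Variable G : mgraph.
Local Notation V := (vert G).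
Local Notation E := (edge G).
Implicit Types (S W : {set V}) (F A B : {set E}) (x y u v : V) (e : E).

Definition cross (V1 : {set V}) : {set E} :=
  [set e | ((esrc e \in V1) && (edst e \in ~: V1)) ||
           ((esrc e \in ~: V1) && (edst e \in V1))].

Lemma cross_disconn (V1 : {set V}) x y : x \in V1 -> y \notin V1 -> ~~ connect (adj (~: cross V1)) x y.
Proof.
move=> xV yV.
have hW : forall a b, a \in V1 -> adj (~: cross V1) a b -> b \in V1.
  move=> a b aV /adjP[e eC [[ea eb]|[ea eb]]]; move: eC;
  by rewrite !inE ea eb aV /=; case: (b \in V1).
apply/negP => h; have := cclosure hW xV h; by rewrite (negbTE yV).
Qed.

Lemma card_E3 (V1 : {set V}) : #|E| = #|induced V1| + #|induced (~: V1)| + #|cross V1|.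
Proof.
rewrite -cardsT -!cardsUD.
- apply: eq_card => e; rewrite !inE.
  by case: (esrc e \in V1); case: (edst e \in V1).
- apply/setP => e; rewrite !inE.
  by case: (esrc e \in V1); case: (edst e \in V1).
- apply/setP => e; rewrite !inE.
  by case: (esrc e \in V1); case: (edst e \in V1).
Qed.

Lemma converse k : 0 < k -> edge_join_decomp G k -> in_F k G.
Proof.
move=> k0 [V1 [c1 c2 hC u1 u2]].
have [I1 t1] := side_trees k0 c1 u1.
have [I2 t2] := side_trees k0 c2 u2.
have ne1 : V1 != set0 by case/andP: c1.
have ne2 : ~: V1 != set0 by case/andP: c2.
have hCk : #|cross V1| = k by exact: hC.
have nV : #|V1| + #|~: V1| = #|V| by rewrite cardsC.
have n1 : 0 < #|V1| by rewrite card_gt0.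
have n2 : 0 < #|~: V1| by rewrite card_gt0.
have nV2 : 1 < #|V| by lia.
have cardE : #|E| = k * #|V|.-1.
  rewrite (card_E3 V1) hCk (trees_card t1) (trees_card t2).
  have -> : #|V|.-1 = (#|V1| - 1) + (#|~: V1| - 1) + 1 by lia.
  by rewrite !mulnDr muln1.
pose c (i : 'I_k) : E := enum_val (cast_ord (esym hCk) i).
have cC : forall i, c i \in cross V1 by move=> i; apply: enum_valP.
have cinj : forall i j, c i = c j -> i = j.
  by move=> i j /enum_val_inj /cast_ord_inj.
case: t1 => fI1 dI1 mI1 cI1; case: t2 => fI2 dI2 mI2 cI2.
have i1 : forall i e, e \in I1 i -> (esrc e \in V1) && (edst e \in V1).
  move=> i e ei; have : e \in induced V1 by rewrite mI1; apply/existsP; exists i.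
  by rewrite inE.
have i2 : forall i e, e \in I2 i -> (esrc e \notin V1) && (edst e \notin V1).
  move=> i e ei; have : e \in induced (~: V1) by rewrite mI2; apply/existsP; exists i.
  by rewrite !inE.
have cx : forall e, e \in cross V1 -> (esrc e \in V1) != (edst e \in V1).
  by move=> e; rewrite !inE; case: (esrc e \in V1); case: (edst e \in V1).
pose T i := c i |: (I1 i :|: I2 i).
have cardI1 : forall i, #|I1 i| = #|V1| - 1.
  move=> i; have sg : is_subgraph V1 (I1 i) by apply/forall_inP; apply: i1.
  have [_ /(_ (fI1 i)) h] := count_le sg; rewrite (conn_ncomp1 (cI1 i)) in h; lia.
have cardI2 : forall i, #|I2 i| = #|~: V1| - 1.
  move=> i; have sg : is_subgraph (~: V1) (I2 i).
    by apply/forall_inP => e /(i2 i); rewrite !inE.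
  have [_ /(_ (fI2 i)) h] := count_le sg; rewrite (conn_ncomp1 (cI2 i)) in h; lia.
have cardT : forall i, #|T i| = #|V|.-1.
  move=> i; rewrite /T cardsU1 cardsUD ?cardI1 ?cardI2.
    have -> : c i \notin I1 i :|: I2 i.
      rewrite in_setU; apply/negP => /orP[/(i1 i)|/(i2 i)]; move: (cx _ (cC i));
      by case: (esrc (c i) \in V1); case: (edst (c i) \in V1).
    rewrite /nat_of_bool; lia.
  apply/setP => e; rewrite !inE; apply/negP => /andP[/(i1 i)/andP[h _] /(i2 i)].
  by rewrite h.
have connT : forall i, connectedb setT (T i).
  move=> i.
  have toS : forall x, connect (adj (T i)) x (esrc (c i)).
    move=> x.
    have ce : connect (adj (T i)) (edst (c i)) (esrc (c i)).
      by rewrite csym; apply: conn_edge; rewrite setU11.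
    case: (boolP (x \in V1)) => xV.
      have s1 : I1 i \subset T i by apply/subsetP => e ei; rewrite !inE ei orbT.
      have := cI1 i; case/andP=> _ /forall_inP/(_ x xV)/forall_inP h.
      move: (cx _ (cC i)); case: (boolP (esrc (c i) \in V1)) => sv /=.
        by move=> _; apply: conn_sub s1 _ _ (h _ sv).
      rewrite negbK => dv; apply: connect_trans ce.
      exact: conn_sub s1 _ _ (h _ dv).
    have s2 : I2 i \subset T i by apply/subsetP => e ei; rewrite !inE ei !orbT.
    have xV' : x \in ~: V1 by rewrite inE.
    have := cI2 i; case/andP=> _ /forall_inP/(_ x xV')/forall_inP h.
    move: (cx _ (cC i)); case: (boolP (esrc (c i) \in V1)) => sv /=.
      move=> dv; apply: connect_trans ce.
      by apply: conn_sub s2 _ _ (h _ _); rewrite inE.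
    by move=> _; apply: conn_sub s2 _ _ (h _ _); rewrite inE.
  rewrite /connectedb; apply/andP; split.
    by apply/set0Pn; exists (esrc (c i)); rewrite inE.
  apply/forall_inP => x _; apply/forall_inP => y _.
  by apply: connect_trans (toS x) _; rewrite csym.
have treeT : forall i, spanning_tree (T i).
  move=> i; rewrite spanning_treeE connT /=.
  apply: (count_forest (S := setT)); first exact: subgraphT.
  by rewrite conn_ncomp1 // cardT cardsT; lia.
have nI1 : forall i j, c i \notin I1 j.
  move=> i j; apply/negP => /(i1 j) /andP[h1 h2]; move: (cx _ (cC i)).
  by rewrite h1 h2.
have nI2 : forall i j, c i \notin I2 j.
  move=> i j; apply/negP => /(i2 j) /andP[h1 h2]; move: (cx _ (cC i)).
  by rewrite (negbTE h1) (negbTE h2).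
have nI12 : forall i j e, e \in I1 i -> e \notin I2 j.
  move=> i j e /(i1 i)/andP[h1 _]; apply/negP => /(i2 j)/andP[h2 _].
  by rewrite h1 in h2.
have dT : forall i j e, e \in T i -> e \in T j -> i = j.
  move=> i j e; rewrite /T !inE => /orP[/eqP ->|/orP[ei|ei]] /orP[/eqP ej|/orP[ej|ej]].
  - exact: cinj.
  - by rewrite (negbTE (nI1 _ _)) in ej.
  - by rewrite (negbTE (nI2 _ _)) in ej.
  - by rewrite ej (negbTE (nI1 _ _)) in ei.
  - exact: dI1 ei ej.
  - by rewrite (negbTE (nI12 _ _ _ ei)) in ej.
  - by rewrite ej (negbTE (nI2 _ _)) in ei.
  - by rewrite (negbTE (nI12 _ _ _ ej)) in ei.
  - exact: dI2 ei ej.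
have edst_k : has_edst G k.
  exists T; split => // i j ij; rewrite -setI_eq0; apply/eqP/setP => e.
  rewrite inE in_set0; apply/negP => /andP[ei ej].
  by move: ij; rewrite (dT _ _ _ ei ej) eqxx.
split => //.
- split.
    exists (cross V1); split => //.
    case/set0Pn: ne1 => x xV; case/set0Pn: ne2 => y; rewrite inE => yV.
    apply/negP => /andP[_ /forall_inP/(_ x (in_setT _))/forall_inP/(_ y (in_setT _))].
    by apply/negP; apply: cross_disconn.
  by move=> F hF; apply: edst_conn edst_k hF.
- split => // /edst_card; rewrite cardE; move: nV2.
  case: #|V| => [//|[//|n]] _ /=; rewrite mulSn; lia.
- move=> G' hV' _ [/edst_card h _]; rewrite cardE -hV'; exact: h.
Qed.

End Conv.

Import Order.TTheory GRing.Theory Num.Theory.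

Section PathGraph.
Variables (m k : nat).

Definition pg_src (e : 'I_m.+1 * 'I_k) : 'I_m.+2 := widen_ord (leqnSn _) e.1.
Definition pg_dst (e : 'I_m.+1 * 'I_k) : 'I_m.+2 := lift ord0 e.1.

Lemma pg_loopless e : pg_src e != pg_dst e.
Proof.
apply/eqP => /(congr1 val); rewrite /pg_src /pg_dst /= /bump /=; lia.
Qed.

Definition PG := @MGraph (ordinal m.+2) (prod (ordinal m.+1) (ordinal k)) pg_src pg_dst pg_loopless.

End PathGraph.

Section PGProps.
Variables (m k : nat).
Local Notation G := (PG m k).

Definition pgT (i : 'I_k) : {set edge G} := [set e : edge G | e.2 == i].

Lemma pg_conn0 i t (ht : t < m.+2) :
  connect (adj (pgT i)) (ord0 : vert G) (Ordinal ht : vert G).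
Proof.
elim: t ht => [|t IH] ht.
  by have -> : Ordinal ht = ord0 :> 'I_m.+2 by apply: val_inj.
have ht' : t < m.+2 by lia.
have ht1 : t < m.+1 by lia.
apply: connect_trans (IH ht') (connect1 _).
apply/adjP; exists ((Ordinal ht1, i) : edge G); first by rewrite inE.
by left; split; apply: val_inj.
Qed.

Lemma pg_connT i : connectedb setT (pgT i).
Proof.
rewrite /connectedb; apply/andP; split.
  by apply/set0Pn; exists (ord0 : vert G); rewrite inE.
apply/forall_inP => x _; apply/forall_inP => y _.
have hx : x = Ordinal (ltn_ord x) :> 'I_m.+2 by apply: val_inj.
have hy : y = Ordinal (ltn_ord y) :> 'I_m.+2 by apply: val_inj.
apply: connect_trans (_ : connect _ _ (ord0 : vert G)) _.
  by rewrite csym hx; apply: pg_conn0.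
by rewrite hy; apply: pg_conn0.
Qed.

Lemma pg_cardT i : #|pgT i| = m.+1.
Proof.
rewrite -[RHS](card_ord m.+1) -(card_imset _ (f := fun j : 'I_m.+1 => ((j, i) : edge G))); last first.
  by move=> a b [].
apply: eq_card => e; rewrite inE; apply/eqP/imsetP => [<-|[j _ ->]] //.
by exists e.1 => //; case: e.
Qed.

Lemma pg_tree i : spanning_tree (pgT i).
Proof.
rewrite spanning_treeE pg_connT /=; apply: (count_forest (S := setT)).
  exact: subgraphT.
by rewrite conn_ncomp1 ?pg_connT // pg_cardT cardsT card_ord addn1.
Qed.

Lemma pg_edst : has_edst G k.
Proof.
exists pgT; split; first exact: pg_tree.
move=> i j ij; rewrite -setI_eq0; apply/eqP/setP => e; rewrite inE in_set0.
rewrite !inE; apply/negP => /andP[/eqP ei /eqP ej]; by move: ij; rewrite -ei -ej eqxx.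
Qed.

Lemma pg_card : #|edge G| = k * #|vert G|.-1.
Proof. by rewrite /= card_prod !card_ord mulnC. Qed.

Lemma pg_cut : exists F : {set edge G}, #|F| = k /\ ~~ connectedb setT (~: F).
Proof.
exists [set e : edge G | e.1 == ord0]; split.
  rewrite -[RHS](card_ord k) -(card_imset _ (f := fun j : 'I_k => ((ord0, j) : edge G))); last first.
    by move=> a b [].
  apply: eq_card => e; rewrite inE; apply/eqP/imsetP => [<-|[j _ ->]] //.
  by exists e.2 => //; case: e.
have h1 : 1 < m.+2 by [].
apply/negP => /andP[_ /forall_inP/(_ (ord0 : vert G) (in_setT _))
  /forall_inP/(_ (Ordinal h1 : vert G) (in_setT _))].
apply/negP; apply/negP => c.
have hW : forall a b : vert G, a \in [set (ord0 : vert G)] ->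
   adj (~: [set e : edge G | e.1 == ord0]) a b -> b \in [set (ord0 : vert G)].
  move=> a b; rewrite inE => /eqP -> /adjP[[j i]]; rewrite !inE /= => ne.
  case=> -[h h'].
    move/(congr1 val): h; rewrite /pg_src /= => h.
    by move: ne; rewrite -val_eqE /= h.
  by move/(congr1 val): h'; rewrite /pg_dst /= /bump /=.
have := cclosure hW (set11 _) c.
by rewrite inE => /eqP/(congr1 val).
Qed.

End PGProps.

Import Order.TTheory GRing.Theory Num.Theory.

Lemma kt_of (G : mgraph) k : 1 < #|vert G| -> has_edst G k ->
  #|edge G| = k * #|vert G|.-1 ->
  (exists F : {set edge G}, #|F| = k /\ ~~ connectedb setT (~: F)) ->
  kappa'_eq G k /\ tau_eq G k.
Proof.
move=> nV hk cardE cut; split; first by split => // F hF; apply: edst_conn hk hF.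
split => // /edst_card; rewrite cardE; move: nV.
case: #|vert G| => [//|[//|n]] _ /=; rewrite mulSn; lia.
Qed.

Section Fwd.
Variable G : mgraph.
Local Notation V := (vert G).
Local Notation E := (edge G).
Implicit Types (S W : {set V}) (F A B : {set E}) (x y u v : V) (e : E).

Lemma card_A3 (V1 : {set V}) A :
  #|A| = #|A :&: induced V1| + #|A :&: induced (~: V1)| + #|A :&: cross V1|.
Proof.
rewrite -!cardsUD.
- apply: eq_card => e; rewrite !inE.
  by case: (e \in A); case: (esrc e \in V1); case: (edst e \in V1).
- apply/setP => e; rewrite !inE.
  by case: (e \in A); case: (esrc e \in V1); case: (edst e \in V1).
- apply/setP => e; rewrite !inE.
  by case: (e \in A); case: (esrc e \in V1); case: (edst e \in V1).
Qed.

Variable k : nat.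
Hypothesis k0 : 0 < k.
Variable Ts : 'I_k -> {set E}.
Hypothesis hT : forall i, spanning_tree (Ts i).
Hypothesis dI : forall i j e, e \in Ts i -> e \in Ts j -> i = j.
Hypothesis cov : forall e, [exists i, e \in Ts i].

Lemma fT i : forest (Ts i).
Proof. by move: (hT i); rewrite spanning_treeE => /andP[]. Qed.

Lemma ud_side W : W != set0 -> (forall i, connectedb W (Ts i :&: induced W)) ->
  connectedb W (induced W) /\ K1_or_ud W k.
Proof.
move=> ne hc.
have cW : connectedb W (induced W).
  by apply: conn_subT (hc (Ordinal k0)); apply: subsetIr.
split => //.
have nW : 0 < #|W| by rewrite card_gt0.
have cardW : #|induced W| = k * (#|W| - 1).
  have dI' : forall i j e, e \in Ts i :&: induced W -> e \in Ts j :&: induced W -> i = j.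
    by move=> i j e /setIP[ei _] /setIP[ej _]; apply: dI ei ej.
  have -> : #|induced W| = #|\bigcup_i (Ts i :&: induced W)|.
    apply: eq_card => e; apply/idP/bigcupP => [eW|[i _ /setIP[]//]].
    by case/existsP: (cov e) => i ei; exists i => //; rewrite in_setI eW ei.
  rewrite card_bigcup // -[in RHS](card_ord k) -sum_nat_const; apply: eq_bigr => i _.
  have sg : is_subgraph W (Ts i :&: induced W).
    by apply: subgraph_sub (ind_sub W); apply: subsetIr.
  have [_ /(_ (forest_sub (subsetIl _ _) (fT i))) h] := count_le sg.
  by rewrite h conn_ncomp1 // addnK.
case: (eqVneq #|W| 1) => [h1|h1]; [by left|right].
have nc1 := conn_ncomp1 cW.
have dpos : 0 < dnm W (induced W) by rewrite /dnm nc1; lia.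
have hd : dens W (induced W) = (k%:R)%R.
  by apply: dens_eq => //; rewrite cardW /dnm nc1.
split => //; apply/le_anti/andP; split.
  apply: gamma_le => p /and4P[_ _ sg _].
  exact: cover_bound fT dI cov _ _ sg.
rewrite -hd; apply: (gamma_ge (p := (W, induced W))).
by rewrite /= !subxx ind_sub dpos.
Qed.

End Fwd.

Lemma forward k (G : mgraph) : 0 < k -> in_F k G -> edge_join_decomp G k.
Proof.
move=> k0 [nV kap [hk _] minE].
have [m hm] : exists m, #|vert G| = m.+2 by exists (#|vert G| - 2); lia.
have hV : #|vert (PG m k)| = #|vert G| by rewrite /= card_ord hm.
have [kp tp] := kt_of (G := PG m k) (k := k) (ltac:(by rewrite /= card_ord))
   (pg_edst m k) (pg_card m k) (pg_cut m k).
have le1 := minE (PG m k) hV kp tp.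
have ge1 := edst_card hk.
have cardE : #|edge G| = k * #|vert G|.-1.
  by apply/eqP; rewrite eqn_leq ge1 -hV -pg_card le1.
case: hk => Ts [hT hd].
have dI : forall i j e, e \in Ts i -> e \in Ts j -> i = j.
  move=> i j e ei ej; apply/eqP; apply/negP => /negP ij.
  by move: (disjointFr (hd i j ij) ei); rewrite ej.
have cov : forall e, [exists i, e \in Ts i].
  have : \bigcup_i Ts i = setT.
    apply/eqP; rewrite eqEcard subsetT cardsT card_bigcup // cardE.
    rewrite -[in X in X <= _](card_ord k) -sum_nat_const; apply: leq_sum => i _.
    by rewrite -(tree_card (hT i)).
  move/setP => h e; move: (h e); rewrite inE => /bigcupP[i _ ei].
  by apply/existsP; exists i.
case: kap => [[F [hF ncF]] _].
move: ncF; rewrite /connectedb; case/nandP.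
  by rewrite negbK -cards_eq0 cardsT => /eqP h; rewrite h in nV.
case/forall_inPn => x _ /forall_inPn [y _ nxy].
pose V1 := [set z | connect (adj (~: F)) x z].
have xV : x \in V1 by rewrite inE connect0.
have yV : y \notin V1 by rewrite inE.
have CF : cross V1 \subset F.
  apply/subsetP => e; rewrite !inE => ec; apply/negPn/negP => eF.
  have ad : connect (adj (~: F)) (esrc e) (edst e) by apply: conn_edge; rewrite inE eF.
  have e1 : connect (adj (~: F)) x (esrc e) = connect (adj (~: F)) x (edst e).
    apply/idP/idP => h; first exact: connect_trans h ad.
    by apply: connect_trans h _; rewrite csym.
  by move: ec; rewrite e1; case: (connect _ _ _).
have meet : forall i, 0 < #|Ts i :&: cross V1|.
  move=> i; rewrite card_gt0; apply/negP => /eqP h0.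
  have hW : forall a b, a \in V1 -> adj (Ts i) a b -> b \in V1.
    move=> a b aV /adjP[e ei hab].
    have : e \notin cross V1.
      by apply/negP => ec; move/setP/(_ e): h0; rewrite in_setI ei ec in_set0.
    rewrite !inE; case: hab => -[ea eb]; rewrite ea eb; move: aV; rewrite inE => ->;
    by case: (connect _ x b).
  have cT : connect (adj (Ts i)) x y.
    by move: (hT i); rewrite spanning_treeE => /andP[/andP[_ /forall_inP/(_ x (in_setT _))
      /forall_inP/(_ y (in_setT _))]].
  by move: yV; rewrite (cclosure hW xV cT).
have dC : forall i j e, e \in Ts i :&: cross V1 -> e \in Ts j :&: cross V1 -> i = j.
  by move=> i j e /setIP[ei _] /setIP[ej _]; apply: dI ei ej.
have sumC : \sum_i #|Ts i :&: cross V1| = #|cross V1|.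
  rewrite -card_bigcup //; apply: eq_card => e; apply/bigcupP/idP => [[i _ /setIP[]//]|ec].
  by case/existsP: (cov e) => i ei; exists i => //; rewrite in_setI ei ec.
have leC : #|cross V1| <= k by rewrite -hF subset_leq_card.
have geC : k <= \sum_i #|Ts i :&: cross V1|.
  rewrite -[in X in X <= _](card_ord k) -[X in X <= _]muln1 -sum_nat_const.
  by apply: leq_sum => i _; apply: meet.
have hC : #|cross V1| = k by lia.
have one : forall i, #|Ts i :&: cross V1| = 1.
  by apply: sum_eq_ge => [i|]; [apply: meet|rewrite sumC hC muln1].
have ne1 : V1 != set0 by apply/set0Pn; exists x.
have ne2 : ~: V1 != set0 by apply/set0Pn; exists y; rewrite inE.
have nV12 : #|V1| + #|~: V1| = #|vert G| by rewrite cardsC.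
have cs : forall i, connectedb V1 (Ts i :&: induced V1) /\
                    connectedb (~: V1) (Ts i :&: induced (~: V1)).
  move=> i.
  have fi := fT hT i.
  have sg1 : is_subgraph V1 (Ts i :&: induced V1).
    by apply: subgraph_sub (ind_sub V1); apply: subsetIr.
  have sg2 : is_subgraph (~: V1) (Ts i :&: induced (~: V1)).
    by apply: subgraph_sub (ind_sub (~: V1)); apply: subsetIr.
  have [_ /(_ (forest_sub (subsetIl _ _) fi)) h1] := count_le sg1.
  have [_ /(_ (forest_sub (subsetIl _ _) fi)) h2] := count_le sg2.
  have g1 := ncomp_gt0 (Ts i :&: induced V1) ne1.
  have g2 := ncomp_gt0 (Ts i :&: induced (~: V1)) ne2.
  have tc := tree_card (hT i).
  have c3 := card_A3 V1 (Ts i); rewrite one in c3.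
  split; apply: ncomp1_conn => //; lia.
have [cW1 u1] := ud_side k0 hT dI cov ne1 (fun i => (cs i).1).
have [cW2 u2] := ud_side k0 hT dI cov ne2 (fun i => (cs i).2).
by exists V1; split.
Qed.


Unset Implicit Arguments.

Theorem theorem4p2 (k : nat) (G : mgraph) :
  0 < k -> (in_F k G <-> edge_join_decomp G k).
Proof.
move=> k0; split; [exact: forward | exact: converse].
Qed.
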